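(* Let $n\ge 2$ be an integer. Suppose that for all integers $m,k$ with $2\le m\le n$, $2\le k\le 2^{m-1}+1$ and $k$ even one has $$v_2\big(s(2^n,2^m-k)\big)=2^n-2^m-(n-m)(2^m-k)+m-1-v_2(k).$$ Then for every integer $i$ with $1\le i\le 2^{n-1}$, $$v_2\big(s(2^n,2i-1)\big)=v_2\big(s(2^n,2i)\big)+n-1.$$
   Context: The (unsigned) Stirling numbers of the first kind $s(n,k)$ are defined by $x(x+1)\cdots(x+n-1)=\sum_{k=0}^n s(n,k)x^k$. $v_2$ denotes the $2$-adic valuation. *)

(* Defs.v *)
From mathcomp Require Import all_boot all_order all_algebra.
Set Implicit Arguments. Unset Strict Implicit. Unset Printing Implicit Defensive.
Import Order.TTheory GRing.Theory Num.Theory.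
Local Open Scope ring_scope.

(* Unsigned Stirling numbers of the first kind:
   x(x+1)...(x+n-1) = \sum_k s(n,k) x^k. *)
Definition stirling1 (n k : nat) : int :=
  (\prod_(i < n) ('X + (i%:R)%:P) : {poly int})`_k.

(* 2-adic valuation of an integer (v2 0 = 0 by convention; only used on
   nonzero values). *)
Definition v2 (z : int) : nat := logn 2 `|z|%N.

(* Main.v *)
Require Import Defs.
From mathcomp Require Import all_boot all_order all_algebra.
From mathcomp Require Import zify ring lra.
Set Implicit Arguments. Unset Strict Implicit.
Import Order.TTheory GRing.Theory Num.Theory.
Local Open Scope ring_scope.

Definition Rp (M : nat) : {poly int} := \prod_(i < M) ('X + (i.+1)%:R%:P).

Lemma stirling_R M k : stirling1 M.+1 k.+1 = (Rp M)`_k.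
Proof.
rewrite /stirling1 big_ord_recl /= addr0 coefXM /=.
done.
Qed.

Lemma coefMXaddC' (p : {poly int}) c j :
  (p * ('X + c%:P))`_j = (if j is j'.+1 then p`_j' else 0) + p`_j * c.
Proof. by rewrite mulrDr coefD coefMX coefMC; case: j. Qed.

Lemma coef_comp_XaddC (p : {poly int}) c j :
  (p \Po ('X + c%:P))`_j = (p^`N(j)).[c].
Proof.
elim/poly_ind: p j => [|p d IHp] j.
  by rewrite comp_poly0 coef0 linear0 horner0.
rewrite comp_poly_MXaddC coefD coefMXaddC' coefC.
case: j => [|j].
  by rewrite nderivn0 hornerMXaddC IHp nderivn0 add0r.
by rewrite nderivnMXaddC hornerD hornerMX !IHp addr0.
Qed.

Lemma Rp_shift M c :
  Rp M \Po ('X + c%:P) = \prod_(i<M) ('X + (c + (i.+1)%:R)%:P).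
Proof.
rewrite /Rp (big_morph (fun p => p \Po ('X + c%:P))
   (fun p r => comp_polyM p r ('X + c%:P)) (comp_polyC 1 _)).
apply: eq_bigr => i _.
by rewrite comp_polyD comp_polyX comp_polyC -addrA polyCD.
Qed.

Lemma coefMXsubC' (p : {poly int}) c j :
  (p * ('X - c%:P))`_j = (if j is j'.+1 then p`_j' else 0) - p`_j * c.
Proof. by rewrite -polyCN coefMXaddC' mulrN. Qed.

Lemma sign_prod (F : nat -> int) M j :
  (\prod_(i<M) ('X - (F i)%:P))`_j =
     (-1)^+(M+j) * (\prod_(i<M) ('X + (F i)%:P))`_j.
Proof.
elim: M j => [|M IH] j.
  rewrite !big_ord0 coef1 add0n.
  by case: j => [|j] //=; rewrite mulr0.
rewrite !big_ord_recr /= coefMXsubC' coefMXaddC'.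
set A := \prod_(i < M) _.
case: j => [|j].
  rewrite !add0r IH addn0 addn0 exprS.
  set a := (-1)^+M; set b := A`_0; set c := F M. ring.
rewrite !IH !addnS !addSn !exprS.
set B := \prod_(i < M) ('X + _).
set a := (-1)^+(M+j); set b := B`_j;  set b' := B`_j.+1; set c := F M. ring.
Qed.

Lemma Rp_rev M :
  Rp M \Po ('X + (- (M.+1)%:R)%:P) = \prod_(i<M) ('X - (i.+1)%:R%:P).
Proof.
rewrite Rp_shift (reindex_inj rev_ord_inj) /=.
apply: eq_bigr => i _; rewrite -polyCN; congr (_ + _%:P).
have := ltn_ord i; rewrite !natz => hi.
lia.
Qed.

Lemma size_Rp M : size (Rp M) = M.+1.
Proof.
have -> : Rp M = \prod_(i < M) ('X - (-(i.+1)%:R)%:P).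
  by apply: eq_bigr => i _; rewrite polyCN opprK.
by rewrite size_prod_XsubC [index_enum _]unlock -enumT size_enum_ord.
Qed.

Lemma lead_Rp M : (Rp M)`_M = 1.
Proof.
have := @monic_prod int _ (index_enum 'I_M) xpredT (fun i : 'I_M => 'X + ((nat_of_ord i).+1%:R)%:P) (fun i _ => monicXaddC _).
rewrite -/(Rp M) => H; have := monicP H; by rewrite lead_coefE size_Rp.
Qed.

Lemma key_id M K :
  \sum_(i < M.+1) (Rp M)`_(K+i) *+ 'C(K+i,K) * (-(M.+1)%:R)^+i
   = (-1)^+(M+K) * (Rp M)`_K.
Proof.
have -> : (-1)^+(M+K) * (Rp M)`_K = (Rp M \Po ('X + (- (M.+1)%:R)%:P))`_K.
  by rewrite Rp_rev (sign_prod (fun n => n.+1%:R)).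
rewrite coef_comp_XaddC (horner_coef_wide _ (n := M.+1)).
  by apply: eq_bigr => i _; rewrite coef_nderivn.
rewrite /nderivn; apply: leq_trans (size_poly _ _) _.
by rewrite size_Rp leq_subr.
Qed.

Lemma Rp_ge0 M j : 0 <= (Rp M)`_j /\ ((j <= M)%N -> 0 < (Rp M)`_j).
Proof.
elim: M j => [|M IH] j.
  rewrite /Rp big_ord0 coef1; case: j => //=.
rewrite /Rp big_ord_recr /= -/(Rp M) coefMXaddC'.
have c0 : (0 : int) < (M.+1)%:R by rewrite ltr0n.
case: j => [|j].
  rewrite add0r; have [_ h] := IH 0%N; split.
    by rewrite mulr_ge0 // ltW // h.
  by move=> _; rewrite mulr_gt0 // h.
have [a1 a2] := IH j; have [b1 b2] := IH j.+1.
split; first by rewrite addr_ge0 // mulr_ge0 // ltW.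
move=> hj; rewrite ltr_wpDr ?a2 //; by rewrite mulr_ge0 // ltW.
Qed.

Definition D (e : nat) (z : int) := ((2 ^ e)%:Z %| z)%Z.

Lemma D_v2 z : D (v2 z) z.
Proof. by rewrite /D dvdzE /v2 absz_nat pfactor_dvdnn. Qed.

Lemma D_le z e : z != 0 -> D e z = (e <= v2 z)%N.
Proof. by move=> nz; rewrite /D dvdzE absz_nat pfactor_dvdn // absz_gt0. Qed.

Lemma D_mono e f z : (e <= f)%N -> D f z -> D e z.
Proof.
move=> ef; rewrite /D => h; apply: dvdz_trans h.
by rewrite dvdzE !absz_nat dvdn_exp2l.
Qed.

Lemma D_add e a b : D e a -> D e b -> D e (a + b).
Proof. exact: rpredD. Qed.

Lemma D_mul e f a b : D e a -> D f b -> D (e + f) (a * b).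
Proof. rewrite /D expnD PoszM; exact: dvdz_mul. Qed.

Lemma D_mull e a b : D e b -> D e (a * b).
Proof. rewrite /D; exact: dvdz_mull. Qed.

Lemma v2_add a b e : a != 0 -> v2 a = e -> D e.+1 b -> v2 (a + b) = e.
Proof.
move=> nz va db.
have nzab : a + b != 0.
  apply/negP=> /eqP h; have : D e.+1 a.
    have -> : a = - b by apply/eqP; rewrite -subr_eq0 opprK h.
    by rewrite /D rpredN.
  by rewrite D_le // va ltnn.
apply/eqP; rewrite eqn_leq -(@D_le (a+b) e nzab) leqNgt -(@D_le (a+b) e.+1 nzab).
have da : D e a by rewrite D_le // va.
have db' : D e b := D_mono (leqnSn e) db.
apply/andP; split; last by rewrite /D rpredD.
apply/negP => h.
have : D e.+1 ((a + b) + - b) by rewrite /D rpredD // rpredN.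
by rewrite addrK D_le // va ltnn.
Qed.

Lemma v2M a b : a != 0 -> b != 0 -> v2 (a * b) = (v2 a + v2 b)%N.
Proof. by move=> ha hb; rewrite /v2 abszM lognM // absz_gt0. Qed.

Lemma v2_pow2 n : v2 (2 ^ n)%:Z = n.
Proof. by rewrite /v2 absz_nat pfactorK. Qed.

Definition Hyp (n : nat) := forall m k : nat, (2 <= m)%N -> (m <= n)%N -> (2 <= k)%N ->
     (k <= 2 ^ m.-1 + 1)%N -> ~~ odd k ->
     (v2 (stirling1 (2 ^ n) (2 ^ m - k)))%:Z =
       (2 ^ n)%:Z - (2 ^ m)%:Z - (n - m)%:Z * ((2 ^ m)%:Z - k%:Z)
       + m%:Z - 1 - (v2 k%:Z)%:Z.

Lemma v2_lt x m : (0 < x)%N -> (x < 2 ^ m)%N -> (v2 x%:Z < m)%N.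
Proof.
move=> x0 xm; rewrite /v2 absz_nat -(@ltn_exp2l 2) //.
apply: leq_ltn_trans xm; apply: dvdn_leq => //; exact: pfactor_dvdnn.
Qed.

Lemma stirling_top N : stirling1 N.+1 N.+1 = 1.
Proof. by rewrite stirling_R lead_Rp. Qed.

Lemma W_step n : (2 <= n)%N -> Hyp n -> forall l, (1 <= l)%N -> (2 * l + 2 <= 2 ^ n)%N ->
  (v2 (stirling1 (2 ^ n) (2 * l)) <= v2 (stirling1 (2 ^ n) (2 * l.+1)) + 2 * n - 2)%N.
Proof.
move=> n2 H l l1 ln.
set t := trunc_log 2 (2 * l).
have tl : (2 ^ t <= 2 * l)%N by apply: trunc_logP => //; lia.
have lt : (2 * l < 2 ^ t.+1)%N by apply: trunc_log_ltn.
set X := (2 ^ t)%N in tl lt.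
have eX : (2 ^ t.+1 = 2 * X)%N by rewrite expnS.
rewrite eX in lt.
have t1 : (1 <= t)%N.
  case: (posnP t) => [t0|//]. move: lt; rewrite /X t0 expn0; lia.
have tn : (t < n)%N.
  rewrite -(@ltn_exp2l 2) //; apply: leq_ltn_trans tl _; lia.
have Hl := H t.+1 (2 * (X - l))%N ltac:(lia) ltac:(lia) ltac:(lia) ltac:(rewrite /=; lia)
   ltac:(by rewrite oddM).
rewrite eX (_ : (2 * X - 2 * (X - l) = 2 * l)%N) in Hl; last by lia.
have [e1|ne1] := eqVneq (X - l)%N 1%N.
  have vk : v2 (2 * (X - l))%N%:Z = 1%N by rewrite e1.
  rewrite vk in Hl.
  have [tn'|tn'] := eqVneq t.+1 n.
    have -> : (2 * l.+1 = 2 ^ n)%N by rewrite -tn' eX; lia.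
    have st := stirling_top (2 ^ n).-1; rewrite prednK ?expn_gt0 // in st.
    rewrite st (_ : v2 1 = 0%N) // add0n.
    have z : (n - t.+1 = 0)%N by lia.
    have e2 : (2 ^ n = 2 * X)%N by rewrite -tn'.
    rewrite z mul0r in Hl.
    lia.
  have tn2 : (t.+2 <= n)%N by rewrite ltn_neqAle tn'.
  have Hl2 := H t.+2 (2 * X)%N ltac:(lia) ltac:(lia) ltac:(lia) ltac:(rewrite /= eX; lia)
   ltac:(by rewrite oddM).
  rewrite (_ : (2 ^ t.+2 - 2 * X = 2 * l.+1)%N) in Hl2; last by rewrite expnS eX; lia.
  rewrite -eX v2_pow2 in Hl2.
  rewrite expnS eX in Hl2.
  have ez : (n - t.+1 = (n - t.+2) + 1)%N by lia.
  rewrite ez e1 in Hl.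
  nia.
have Hl2 := H t.+1 (2 * (X - l - 1))%N ltac:(lia) ltac:(lia) ltac:(move: ne1; lia)
  ltac:(rewrite /=; lia) ltac:(by rewrite oddM).
rewrite eX (_ : (2 * X - 2 * (X - l - 1) = 2 * l.+1)%N) in Hl2; last by move: ne1; lia.
have vb := @v2_lt (2 * (X - l - 1))%N t.+1 ltac:(move: ne1; lia) ltac:(rewrite eX; lia).
have vb2 : (0 <= v2 (2 * (X - l))%N%:Z)%N by [].
have ez : (2 * X - 2 * (X - l - 1) = (2 * X - 2 * (X - l)) + 2)%N by move: ne1; lia.
move: Hl Hl2 vb; set A := (n - t.+1)%N; set B := (2 * X - 2 * (X - l))%N.
set v1 := v2 _; set v3 := v2 _; set v4 := v2 _; set v5 := v2 _.
move=> Hl Hl2 vb.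
have eY : ((2 * (X - l))%N = (2 * (X - l - 1))%N + 2)%N by move: ne1; lia.
rewrite eY in Hl.
move: Hl Hl2; set Z := (2 * (X - l - 1))%N => Hl Hl2.
rewrite PoszD in Hl.
have tA : (A + t.+1 = n)%N by rewrite /A; lia.
nia.
Qed.

Lemma key2 S K :
  (Rp S.+1)`_K + (Rp S.+1)`_(K.+1) *+ K.+1 * (-(S.+2)%:R)
  + \sum_(j < S) (Rp S.+1)`_(K + j.+2) *+ 'C(K + j.+2, K) * (-(S.+2)%:R)^+(j.+2)
  = (-1)^+(S.+1 + K) * (Rp S.+1)`_K.
Proof.
rewrite -key_id !big_ord_recl /= addn0 binn mulr1n expr0 mulr1 addn1 binSn expr1.
by rewrite addrA.
Qed.

Lemma v2_odd m : odd m -> v2 m%:Z = 0%N.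
Proof.
move=> om; rewrite /v2 absz_nat; apply: logn_coprime.
by rewrite coprime_sym coprimen2 om.
Qed.

Lemma D_powN n e : D (n * e) ((-(2 ^ n)%N%:R)^+e : int).
Proof.
rewrite exprNn; apply: D_mull.
by rewrite /D -natrX -expnM natz dvdzz.
Qed.

Lemma Rp_big M K : (M.+1 <= K)%N -> (Rp M)`_K = 0.
Proof. by move=> h; rewrite nth_default // size_Rp. Qed.

Lemma W_chain n : (2 <= n)%N -> Hyp n -> forall i d, (1 <= i)%N -> (2 * (i + d) <= 2 ^ n)%N ->
  (v2 (stirling1 (2 ^ n) (2 * i)) <= v2 (stirling1 (2 ^ n) (2 * (i + d))) + (2 * n - 2) * d)%N.
Proof.
move=> n2 H i d i1; elim: d => [|d IH] hd.
  by rewrite addn0 muln0 addn0.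
have := W_step n2 H (l := i + d) ltac:(lia) ltac:(lia).
rewrite addnS; have := IH ltac:(lia); lia.
Qed.

Lemma down_ind (h : nat) (Q : nat -> Prop) :
  (forall i, (forall l, (i < l)%N -> (l <= h)%N -> Q l) -> (1 <= i)%N -> (i <= h)%N -> Q i) ->
  forall i, (1 <= i)%N -> (i <= h)%N -> Q i.
Proof.
move=> step; suff: forall d i, (h - i <= d)%N -> (1 <= i)%N -> (i <= h)%N -> Q i.
  by move=> + i => /(_ (h - i)%N i (leqnn _)).
elim=> [|d IH] i hd i1 ih; apply: step => // l il lh; [exfalso; lia | apply: IH => //; lia].
Qed.

Lemma D_mulrn e x m : D e x -> D e (x *+ m).
Proof. by rewrite /D => h; rewrite rpredMn. Qed.

Theorem lemma2p5 (n : nat) (hn : (2 <= n)%N) :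
  (forall m k : nat, (2 <= m)%N -> (m <= n)%N -> (2 <= k)%N ->
     (k <= 2 ^ m.-1 + 1)%N -> ~~ odd k ->
     (v2 (stirling1 (2 ^ n) (2 ^ m - k)))%:Z =
       (2 ^ n)%:Z - (2 ^ m)%:Z - (n - m)%:Z * ((2 ^ m)%:Z - k%:Z)
       + m%:Z - 1 - (v2 k%:Z)%:Z) ->
  forall i : nat, (1 <= i)%N -> (i <= 2 ^ n.-1)%N ->
    v2 (stirling1 (2 ^ n) (2 * i).-1) = (v2 (stirling1 (2 ^ n) (2 * i)) + n.-1)%N.
Proof.
move=> H.
set h := (2 ^ n.-1)%N.
have eN : (2 ^ n = 2 * h)%N by rewrite /h -expnS prednK //; lia.
have h2 : (2 <= h)%N by rewrite /h -[2%N]expn1 leq_exp2l //; lia.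
set S := (2 * h - 2)%N.
have eS : (2 * h = S.+2)%N by rewrite /S; lia.
set R := Rp S.+1.
have sR : forall j, stirling1 (2 ^ n) j.+1 = R`_j by move=> j; rewrite eN eS stirling_R.
have Wc : forall i d, (1 <= i)%N -> (2 * (i + d) <= 2 * h)%N ->
   (v2 R`_(2 * i - 1) <= v2 R`_(2 * (i + d) - 1) + (2 * n - 2) * d)%N.
  move=> i d i1 hd; have := W_chain hn H (d := d) i1 ltac:(lia).
  have -> : stirling1 (2 ^ n) (2 * i) = R`_(2 * i - 1) by rewrite -sR; congr stirling1; lia.
  have -> : stirling1 (2 ^ n) (2 * (i + d)) = R`_(2 * (i + d) - 1) by rewrite -sR; congr stirling1; lia.
  done.
suff main : forall i, (1 <= i)%N -> (i <= h)%N ->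
   v2 R`_(2 * i - 2) = (v2 R`_(2 * i - 1) + n.-1)%N.
  move=> i i1 ih.
  have -> : stirling1 (2 ^ n) (2 * i).-1 = R`_(2 * i - 2) by rewrite -sR; congr stirling1; lia.
  have -> : stirling1 (2 ^ n) (2 * i) = R`_(2 * i - 1) by rewrite -sR; congr stirling1; lia.
  exact: main.
apply: (down_ind (Q := fun i => v2 R`_(2 * i - 2) = (v2 R`_(2 * i - 1) + n.-1)%N)).
move=> i IH i1 ih /=.
set K := (2 * i - 2)%N.
have eK1 : (2 * i - 1 = K.+1)%N by rewrite /K; lia.
rewrite eK1.
have kid := key2 S K.
have oS : ~~ odd S by rewrite /S (_ : (2 * h - 2 = 2 * (h - 1))%N) ?oddM //; lia.
have oK : ~~ odd K by rewrite /K (_ : (2 * i - 2 = 2 * (i - 1))%N) ?oddM //; lia.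
have sg : (-1) ^+ (S.+1 + K) = -1 :> int.
  by rewrite addSn -signr_odd oddS oddD (negbTE oS) (negbTE oK).
rewrite sg mulN1r in kid.
have eSn : (S.+2)%:R = (2 ^ n)%N%:R :> int by rewrite eN eS.
rewrite eSn mulrN in kid.
set T := \sum_(j < S) _ in kid.
set A := R`_K.+1 *+ K.+1 * (2 ^ n)%N%:R in kid.
have e2 : R`_K * 2 = A + - T.
  move: kid; rewrite -/R; lia.
have nzK : R`_K != 0 by have [_ p] := Rp_ge0 S.+1 K; rewrite gt_eqF // p //; lia.
have nzK1 : R`_K.+1 != 0 by have [_ p] := Rp_ge0 S.+1 K.+1; rewrite gt_eqF // p //; lia.
have v2L : v2 (R`_K * 2) = (v2 R`_K + 1)%N by rewrite v2M.
have nzN : (2 ^ n)%N%:R != 0 :> int by rewrite pnatr_eq0 expn_eq0.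
have nzk : (K.+1)%:R != 0 :> int by rewrite pnatr_eq0.
have vA : v2 A = (v2 R`_K.+1 + n)%N.
  rewrite /A -[R`_K.+1 *+ K.+1]mulr_natr (v2M (mulf_neq0 nzK1 nzk) nzN) (v2M nzK1 nzk).
  by rewrite !natz v2_odd ?v2_pow2 ?addn0 // oddS oK.
suff dT : D (v2 A).+1 (- T).
  rewrite vA in dT.
  have nzA : A != 0 by rewrite /A -[R`_K.+1 *+ K.+1]mulr_natr !mulf_neq0.
  have := v2_add nzA vA dT.
  rewrite -e2 v2L => hv; rewrite -subn1; move: hv; set a := v2 (R`_K); set b := v2 (R`_K.+1). clearbody a b; lia.
rewrite vA /D rpredN /T; apply: rpred_sum => j _.
rewrite -/R.
have [big|small] := leqP S.+2 (K + j.+2)%N.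
  by rewrite Rp_big // mul0rn mul0r rpred0.
have dterm := D_mul (D_mulrn 'C(K + j.+2, K) (D_v2 R`_(K + j.+2))) (D_powN n j.+2).
apply: (D_mono _ dterm).
have ej := odd_double_half j.
set d := j./2 in ej.
have WcI := Wc i d.+1 i1 ltac:(lia).
rewrite eK1 in WcI.
case oj: (odd j) ej => /= ej.
  have -> : (K + j.+2 = 2 * (i + d.+1) - 1)%N by lia.
  move: WcI; set a := v2 _; set b := v2 _ => WcI.
  clearbody a b; nia.
have IHl := IH (i + d.+1)%N ltac:(lia) ltac:(lia).
have -> : (K + j.+2 = 2 * (i + d.+1) - 2)%N by lia.
rewrite IHl.
move: WcI; set a := v2 _; set b := v2 _ => WcI.
clearbody a b; rewrite -subn1; nia.
Qed.
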